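(* Let $$\tau_1(x)=\begin{cases}\tfrac43x,&0\le x<\tfrac3{20},\\ 16x-\tfrac{11}5,&\tfrac3{20}\le x<\tfrac15,\\ 5x \pmod 1,&\tfrac15\le x\le1,\end{cases}\qquad \tau_2(x)=\begin{cases}16x,&0\le x<\tfrac1{20},\\ \tfrac43x+\tfrac{11}{15},&\tfrac1{20}\le x<\tfrac15,\\ 5x\pmod 1,&\tfrac15\le x\le1.\end{cases}$$ The map $\tau(x)=5x \pmod 1$ satisfies $\tau_1\le\tau\le\tau_2$ and preserves Lebesgue measure. However, there is no Borel measurable function $p:[0,1]\to[0,1]$ such that the position dependent random map $T=(\tau_1,\tau_2;p,1-p)$ preserves Lebesgue measure.
   Context: A position dependent random map $T=(\tau_1,\tau_2;p,1-p)$ with measurable $p:[0,1]\to[0,1]$ moves a point $x$ to $\tau_1(x)$ with probability $p(x)$ and to $\tau_2(x)$ with probability $1-p(x)$. It preserves a probability measure $\mu$ if $\mu(A)=\int\big(p(x)\chi_A(\tau_1(x))+(1-p(x))\chi_A(\tau_2(x))\big)\,d\mu(x)$ for every Borel $A\subseteq[0,1]$; for $\mu$ with density $f$ this is equivalent to $P_{\tau_1}(pf)+P_{\tau_2}((1-p)f)=f$, where $P_{\tau_k}$ is the Frobenius–Perron operator of $\tau_k$. *)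

(* Defs.v *)
(* R : realType, Borel sets = the canonical
   measurable sets of R, Lebesgue measure = lebesgue_measure. *)
From HB Require Import structures.
From mathcomp Require Import all_boot all_order all_algebra.
From mathcomp Require Import all_classical all_reals all_analysis.
Set Implicit Arguments. Unset Strict Implicit. Unset Printing Implicit Defensive.
Import Order.TTheory GRing.Theory Num.Theory.
Import numFieldNormedType.Exports.
Local Open Scope classical_set_scope.
Local Open Scope ring_scope.

Section Maps.
Variable R : realType.

Definition tau5 (x : R) : R := 5 * x - (Num.floor (5 * x))%:~R.

Definition tau1 (x : R) : R :=
  if x < 3 / 20 then 4 / 3 * x
  else if x < 1 / 5 then 16 * x - 11 / 5
  else tau5 x.

Definition tau2 (x : R) : R :=
  if x < 1 / 20 then 16 * x
  else if x < 1 / 5 then 4 / 3 * x + 11 / 15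
  else tau5 x.

Definition preserves_leb (t : R -> R) : Prop :=
  forall A : set R, measurable A -> A `<=` `[0, 1] ->
    lebesgue_measure (`[0, 1] `&` t @^-1` A) = lebesgue_measure A.

Definition random_map_preserves_leb (t1 t2 p : R -> R) : Prop :=
  forall A : set R, measurable A -> A `<=` `[0, 1] ->
    lebesgue_measure A =
    (\int[lebesgue_measure]_(x in `[0%R, 1%R])
       (p x * \1_A (t1 x) + (1 - p x) * \1_A (t2 x))%:E)%E.

End Maps.

(* Main.v *)
Require Import Defs.
From HB Require Import structures.
From mathcomp Require Import all_boot all_order all_algebra.
From mathcomp Require Import all_classical all_reals all_analysis measurable_realfun.
From mathcomp Require Import ring lra.
Import Order.TTheory GRing.Theory Num.Theory.
Local Open Scope classical_set_scope.
Local Open Scope ring_scope.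
Section S.
Variable R : realType.
Local Notation mu := (@lebesgue_measure R).
Definition hk (k : R) (x : R) : R := 5 * x - k.
Lemma mhk k : measurable_fun setT (hk k).
Proof. by apply: measurable_funB => //; apply: measurable_funM. Qed.
Lemma mhk' k : measurable_fun (setT : set (measurableTypeR R))
   (hk k : measurableTypeR R -> measurableTypeR R).
Proof. exact: mhk. Qed.
Definition pfm k : {measure set (measurableTypeR R) -> \bar R} :=
  measure_function_pushforward__canonical__measure_function_Measure
    (@lebesgue_measure R) (mhk' k).
Definition msc k : {measure set (measurableTypeR R) -> \bar R} :=
  mscale 5%:nng (pfm k).

Lemma hk_itv k (a b : R) : hk k @^-1` `]a, b]%classic = `](a + k) / 5, (b + k) / 5]%classic.
Proof.
apply/seteqP; split => x /=; rewrite !in_itv /= /hk => /andP[h1 h2];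
  apply/andP; split.
- by rewrite ltr_pdivrMr //; lra.
- by rewrite ler_pdivlMr //; lra.
- by move: h1; rewrite ltr_pdivrMr //; lra.
- by move: h2; rewrite ler_pdivlMr //; lra.
Qed.

Lemma leb_hk k A : measurable A ->
  lebesgue_measure A = (5%:E * lebesgue_measure (hk k @^-1` A))%E.
Proof.
move=> mA.
have := @lebesgue_measure_unique R (msc k) _ A mA.
apply => _ [[a b] _ <-] /=.
rewrite /msc /mscale /= /pushforward hk_itv !lebesgue_measure_itv /=.
rewrite !lte_fin.
have -> : ((a + k) / 5 < (b + k) / 5) = (a < b).
  by rewrite ltr_pM2r // ?invr_gt0 // ltrD2r.
case: ifP => ab; last by rewrite mule0.
by rewrite -!EFinD -EFinM; congr (_%:E); field.
Qed.

Lemma leb_hk' k A : measurable A ->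
  lebesgue_measure (hk k @^-1` A) = ((5^-1)%:E * lebesgue_measure A)%E.
Proof.
move=> mA; rewrite (@leb_hk k A mA) muleA -EFinM mulVf ?mul1e //.
Qed.

Lemma tau5_itv (x : R) : 0 <= tau5 x < 1.
Proof.
rewrite /tau5; have /andP[h1 h2] := floor_itv (5 * x).
rewrite intrD in h2; apply/andP; split; lra.
Qed.

Lemma tau5_k (x : R) (k : nat) : k%:R <= 5 * x < k%:R + 1 -> tau5 x = 5 * x - k%:R.
Proof.
move=> h; rewrite /tau5 (@floor_def _ _ k%:Z) //.
by rewrite intrD /= !pmulrn.
Qed.

Section P2.
Variables (A : set R) (mA : measurable A) (A01 : A `<=` `[0, 1]).
Let B := A `\` [set 1].
Let mB : measurable B.
Proof. exact: measurableD. Qed.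
Let B01 y : B y -> 0 <= y < 1.
Proof.
move=> [Ay y1]; have := A01 _ Ay; rewrite /= in_itv /= => /andP[h1 h2].
apply/andP; split => //; rewrite lt_neqAle h2 andbT; apply/eqP => y1'.
by apply: y1; rewrite y1'.
Qed.

Definition U n := [set x : R | exists2 k : nat, (k < n)%N & B (5 * x - k%:R)].

Lemma US n : U n.+1 = U n `|` hk n%:R @^-1` B.
Proof.
apply/seteqP; split => x /=.
  move=> [k]; rewrite ltnS leq_eqVlt => /orP[/eqP -> | kn] Bk.
    by right.
  by left; exists k.
move=> [[k kn Bk]|Bn]; first by exists k => //; apply: ltnW.
by exists n.
Qed.

Lemma mU n : measurable (U n).
Proof.
elim: n => [|n IH].
  rewrite (_ : U 0 = set0); first exact: measurable0.
  by apply/seteqP; split => x // [].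
rewrite US; apply: measurableU => //.
by rewrite -[_ @^-1` _]setTI; apply: mhk.
Qed.

Lemma muU n : mu (U n) = ((n%:R / 5)%:E * mu B)%E.
Proof.
elim: n => [|n IH].
  rewrite (_ : U 0 = set0); first by rewrite measure0 mul0r mul0e.
  by apply/seteqP; split => x // [].
rewrite US measureU //; last 2 first.
- by rewrite -[_ @^-1` _]setTI; apply: mhk.
- apply/seteqP; split => x // [[k kn /B01 /andP[h1 h2]] /B01 /andP[h3 h4]].
  rewrite /hk in h3 h4.
  have : (k.+1)%:R <= n%:R :> R by rewrite ler_nat.
  rewrite -natr1.
  lra.
rewrite -[X in (X + _)%E]/(mu (U n)) -[X in (_ + X)%E]/(mu (hk n%:R @^-1` B)).
rewrite IH leb_hk' // -ge0_muleDl ?lee_fin //; first by rewrite -EFinD -natr1; congr ((_)%:E * _)%E; field.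
exact (mU n).
Qed.

Definition S5 := `[0, 1] `&` (@tau5 R) @^-1` A.

Lemma U_S5 : U 5 `<=` S5.
Proof.
move=> x [k k5 Bk]; have /andP[h1 h2] := B01 _ Bk.
have kle : k%:R <= 4 :> R by rewrite ler_nat -ltnS.
have k0 : 0 <= k%:R :> R by [].
have tk : tau5 x = 5 * x - k%:R by apply: tau5_k; lra.
split; last by rewrite /= tk; case: Bk.
rewrite /= in_itv /=; apply/andP; split; lra.
Qed.

Lemma S5_U : S5 `<=` U 5 `|` [set 1].
Proof.
move=> x [/= x01 Ax]; rewrite in_itv /= in x01; case/andP: x01 => x0 x1.
have [->|x1'] := eqVneq x 1; first by right.
left.
have xl1 : x < 1 by rewrite lt_neqAle x1' x1.
have m0 : (0 <= Num.floor (5 * x))%R by rewrite floor_ge0; lra.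
have m5 : (Num.floor (5 * x) < 5)%R.
  by rewrite floor_lt_int; rewrite (_ : (5%:~R : R) = 5) //; lra.
case E: (Num.floor (5 * x)) m0 m5 => [k|k] //= _ k5.
exists k; first by [].
have t5 : tau5 x = 5 * x - k%:R by rewrite /tau5 E /= pmulrn.
rewrite -t5; split => // t1.
by have := tau5_itv x; rewrite t1; lra.
Qed.

Lemma S5_eq : S5 = U 5 `|` (S5 `&` [set 1]).
Proof.
apply/seteqP; split => x.
  move=> Sx; case: (S5_U _ Sx) => [Ux|x1]; first by left.
  by right.
by move=> [/U_S5|[]].
Qed.

Lemma mS1 : measurable (S5 `&` [set 1]).
Proof.
have [S1|S1] := pselect (S5 1).
  rewrite (_ : _ `&` _ = [set 1]); first exact: measurable_set1.
  by apply/seteqP; split => x; [case|move=> -> ].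
rewrite (_ : _ `&` _ = set0); first exact: measurable0.
by apply/seteqP; split => x // [Sx x1]; apply: S1; rewrite -x1.
Qed.

Lemma mS5 : measurable S5.
Proof. by rewrite S5_eq; apply: measurableU => //; [apply: mU|apply: mS1]. Qed.

Lemma muS5 : mu S5 = mu A.
Proof.
rewrite S5_eq measureU0 //; last 3 first.
- exact (mU 5).
- exact mS1.
- apply/eqP; rewrite -measure_le0.
  rewrite (le_trans (@le_measure _ _ _ lebesgue_measure (S5 `&` [set 1]) [set 1] _ _ _)) //.
  + by rewrite inE; exact mS1.
  + by rewrite inE; exact: measurable_set1.
  + by rewrite le_eqVlt; apply/orP; left; apply/eqP; exact: lebesgue_measure_set1.
rewrite -[X in X = _]/(mu (U 5)) muU divff ?mul1e //.
have -> : A = B `|` (A `&` [set 1]).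
  apply/seteqP; split => x.
    move=> Ax; have [x1|x1] := eqVneq x 1; [by right|left; split => //; exact/eqP].
  by move=> [[]|[]].
have mA1 : measurable (A `&` [set 1]).
  by apply: measurableI => //; exact: measurable_set1.
rewrite measureU0 //.
apply/eqP; rewrite -measure_le0.
rewrite (le_trans (@le_measure _ _ _ lebesgue_measure (A `&` [set 1]) [set 1] _ _ _)) //.
- by rewrite inE.
- by rewrite inE; exact: measurable_set1.
- by rewrite le_eqVlt; apply/orP; left; apply/eqP; exact: lebesgue_measure_set1.
Qed.
End P2.

Lemma tau5_small (x : R) : 0 <= x -> x < 1 / 5 -> tau5 x = 5 * x.
Proof. by move=> x0 x5; rewrite (@tau5_k x 0) ?subr0 //; apply/andP; split; lra. Qed.

Lemma part1 (x : R) : x \in `[0, 1] -> tau1 x <= tau5 x <= tau2 x.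
Proof.
rewrite in_itv /= => /andP[x0 x1].
rewrite /tau1 /tau2; case: (ltP x (1 / 5)) => h5.
  have t5 := tau5_small x x0 h5.
  by case: (ltP x (3 / 20)) => h3; case: (ltP x (1 / 20)) => h1;
    rewrite t5; apply/andP; split; lra.
by case: (ltP x (3 / 20)) => h3; case: (ltP x (1 / 20)) => h1;
  rewrite ?lexx //; lra.
Qed.

Lemma mu_cc (a b : R) : a < b -> mu `[a, b]%classic = (b - a)%:E.
Proof. by move=> ab; rewrite lebesgue_measure_itv /= lte_fin ab -EFinD. Qed.

Lemma le_int_nm (D : set R) (f1 f2 : R -> \bar R) :
  (forall x, D x -> 0 <= f1 x)%E -> (forall x, D x -> f1 x <= f2 x)%E ->
  (\int[mu]_(x in D) f1 x <= \int[mu]_(x in D) f2 x)%E.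
Proof.
move=> f10 f12.
have f20 : (forall x, D x -> 0 <= f2 x)%E.
  by move=> x Dx; apply: le_trans (f10 _ Dx) (f12 _ Dx).
rewrite !ge0_integralE //.
apply: ge_ereal_sup => _ [h /= hf <-].
apply: ereal_sup_ubound; exists h => //= x.
apply: le_trans (hf x) _.
rewrite /patch; case: ifPn => // /set_mem Dx.
exact: f12.
Qed.

Lemma ind_range (B : set R) (y : R) : (0 : R) <= (\1_B y : R) <= 1.
Proof. by rewrite indicE; case: (y \in B); rewrite /= ?lexx ?ler01. Qed.

Lemma comb_le (a b c : R) : 0 <= a <= 1 -> 0 <= b <= 1 -> 0 <= c <= 1 ->
  0 <= a * b + (1 - a) * c <= 1.
Proof. move=> /andP[? ?] /andP[? ?] /andP[? ?]; apply/andP; split; nra. Qed.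

Lemma part3 : ~ (exists p : R -> R,
       measurable_fun (`[0, 1] : set R) p /\
       (forall x, x \in `[0, 1] -> 0 <= p x <= 1) /\
       random_map_preserves_leb (@tau1 R) (@tau2 R) p).
Proof.
move=> [p [_ [p01 hp]]].
pose A : set R := `[1 / 5, 4 / 5]%classic.
have mA : measurable A by exact: measurable_itv.
have A01 : A `<=` `[0, 1].
  by move=> y; rewrite /A /= !in_itv /= => /andP[? ?]; apply/andP; split; lra.
pose S := S5 A.
pose J1 : set R := `[1 / 80, 1 / 20]%classic.
pose J2 : set R := `[3 / 20, 3 / 16]%classic.
pose I : set R := `[1 / 25, 4 / 25]%classic.
pose C := J1 `|` J2 `|` (S `\` I).
have hitC x : x \in `[0, 1] -> A (tau1 x) \/ A (tau2 x) -> C x.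
  rewrite in_itv /= => /andP[x0 x1].
  rewrite /tau1 /tau2; case: (ltP x (1 / 5)) => h5.
    have t5 := tau5_small x x0 h5.
    case: (ltP x (3 / 20)) => h3; case: (ltP x (1 / 20)) => h1 /=;
      case; rewrite /A /= in_itv /= => /andP[u v];
      by [exfalso; lra | left; left; rewrite /J1 /= in_itv /=; apply/andP; split; lra
          | left; right; rewrite /J2 /= in_itv /=; apply/andP; split; lra].
  have hS : A (tau5 x) -> C x.
    move=> At; right; split.
      by split => //; rewrite /= in_itv /=; apply/andP; split.
    by rewrite /I /= in_itv /= => /andP[_ u]; lra.
  case: (ltP x (3 / 20)) => h3; first by exfalso; lra.
  case: (ltP x (1 / 20)) => h1; first by exfalso; lra.
  by case => /hS.
have IS : I `<=` S.
  move=> x; rewrite /I /= in_itv /= => /andP[u v].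
  split; first by rewrite /= in_itv /=; apply/andP; split; lra.
  rewrite /= tau5_small; try lra.
  by rewrite /A /= in_itv /=; apply/andP; split; lra.
have mS : measurable S by exact: mS5.
have muS : mu S = mu A by exact: muS5.
have muA : mu A = (3 / 5)%:E.
  by rewrite /A mu_cc; [congr (_%:E)|]; lra.
have mI : measurable I by exact: measurable_itv.
have mC : measurable C.
  apply: measurableU; last exact: measurableD.
  by apply: measurableU; exact: measurable_itv.
have := hp A mA A01.
rewrite muA => eq.
have le1 : (\int[mu]_(x in `[0%R, 1%R]) (p x * \1_A (tau1 x) + (1 - p x) * \1_A (tau2 x))%:E
    <= \int[mu]_(x in `[0%R, 1%R]) (\1_C x)%:E)%E.
  apply: le_int_nm => x /= x01.
    have /andP[] := @comb_le _ _ _ (p01 x x01) (ind_range A (tau1 x)) (ind_range A (tau2 x)).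
    by rewrite lee_fin.
  have /andP[_ g1] := @comb_le _ _ _ (p01 x x01) (ind_range A (tau1 x)) (ind_range A (tau2 x)).
  case: (boolP (x \in C)) => xC.
    by rewrite [\1_C x]indicE xC lee_fin /=.
  have n1 : \1_A (tau1 x) = 0 :> R.
    rewrite indicE memNset // => At; move/negP: xC; apply; apply/mem_set.
    by apply: hitC => //; left.
  have n2 : \1_A (tau2 x) = 0 :> R.
    rewrite indicE memNset // => At; move/negP: xC; apply; apply/mem_set.
    by apply: hitC => //; right.
  rewrite n1 n2 !mulr0 addr0 lee_fin.
  by case/andP: (ind_range C x).
rewrite integral_indic // in le1.
have h1 : (mu (C `&` `[0%R, 1%R]) <= mu C)%E.
  apply: le_measure; rewrite ?inE //.
  by apply: measurableI => //; exact: measurable_itv.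
have mJ1 : measurable J1 by exact: measurable_itv.
have mJ2 : measurable J2 by exact: measurable_itv.
have h2 : (mu C <= mu (J1 `|` J2) + mu (S `\` I))%E.
  by apply: measureU2 => //; [apply: measurableU|apply: measurableD].
have h3 : (mu (J1 `|` J2) <= mu J1 + mu J2)%E by apply: measureU2.
have h4 : mu (S `\` I) = (mu S - mu (S `&` I))%E.
  apply: measureD => //.
  by rewrite -[X in (X < _)%E]/(mu S) muS muA ltry.
have e1 : mu J1 = (1 / 20 - 1 / 80)%:E by rewrite mu_cc //; lra.
have e2 : mu J2 = (3 / 16 - 3 / 20)%:E by rewrite mu_cc //; lra.
have e3 : mu I = (4 / 25 - 1 / 25)%:E by rewrite mu_cc //; lra.
rewrite setIidr // muS muA e3 in h4.
rewrite e1 e2 in h3.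
rewrite h4 in h2.
have H := le_trans (le_trans le1 h1) (le_trans h2 (leeD h3 (lexx _))).
rewrite -eq -EFinB -!EFinD lee_fin in H.
move: H; clear; lra.
Qed.
End S.

Theorem mainTheorem6 (R : realType) :
  (forall x : R, x \in `[0, 1] -> tau1 x <= tau5 x <= tau2 x) /\
  preserves_leb (@tau5 R) /\
  ~ (exists p : R -> R,
       measurable_fun (`[0, 1] : set R) p /\
       (forall x, x \in `[0, 1] -> 0 <= p x <= 1) /\
       random_map_preserves_leb (@tau1 R) (@tau2 R) p).
Proof.
split; first exact: part1.
split; last exact: part3.
move=> A mA A01; exact: muS5.
Qed.
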